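(* Consider any run of Algorithm 1 (described in the context) under the standing assumption. The number of successful iterations performed before an $(\epsilon_g,\epsilon_H)$-stationary point is reached satisfies \[ |\mathcal{S}|\ \le\ \Big\lfloor \mathcal{C}_{\mathcal S}\max\{\epsilon_H^{-1},\ \epsilon_g^{-2}\epsilon_H,\ \epsilon_H^{-3}\}\Big\rfloor+1, \qquad \mathcal{C}_{\mathcal S}:=\tfrac{4(f_0-f_{\rm low})}{\eta}\max\Big\{\tfrac{1}{\delta_0^2},\ \tfrac{L_H^2}{9\gamma_1^2(1-\eta)^2},\ 1+2L_H\Big\}. \]
   Context: Let $f:\mathbb{R}^n\to\mathbb{R}$ with gradient $g=\nabla f$ and Hessian $H=\nabla^2 f$; $\|\cdot\|$ is the Euclidean norm and $\lambda_{\min}(\cdot)$ the smallest eigenvalue of a symmetric matrix. A point $x$ is $(\epsilon_g,\epsilon_H)$-stationary if $\|g(x)\|\le\epsilon_g$ and $\lambda_{\min}(H(x))\ge-\epsilon_H$. Write $f_k=f(x_k)$, $g_k=g(x_k)$, $H_k=H(x_k)$ and $m_k(x):=f_k+g_k^T(x-x_k)+\tfrac12(x-x_k)^TH_k(x-x_k)$. Algorithm 1 (exact trust-region Newton method). Inputs: tolerances $\epsilon_g,\epsilon_H>0$; parameters $\gamma_1\in(0,1)$, $\gamma_2\in[1,\infty)$, $\psi\in(1/\gamma_2,1]$; $x_0\in\mathbb{R}^n$; $\delta_0>0$; $\delta_{\max}\ge\delta_0$; $\eta\in(0,1)$. For $k=0,1,2,\dots$: evaluate $g_k,H_k$; if $\|g_k\|\le\epsilon_g$,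 compute $\lambda_k=\lambda_{\min}(H_k)$ and, if $\lambda_k\ge-\epsilon_H$, return $x_k$ (terminate). Otherwise compute $s_k$ as a global solution of $\min_{s}\ m_k(x_k+s)+\tfrac12\epsilon_H\|s\|^2$ subject to $\|s\|\le\delta_k$. Set $\rho_k=\frac{f_k-f(x_k+s_k)}{m_k(x_k)-m_k(x_k+s_k)}$. If $\rho_k\ge\eta$: $x_{k+1}=x_k+s_k$, and $\delta_{k+1}=\min\{\gamma_2\delta_k,\delta_{\max}\}$ if $\|s_k\|\ge\psi\delta_k$, else $\delta_{k+1}=\delta_k$. If $\rho_k<\eta$: $x_{k+1}=x_k$ and $\delta_{k+1}=\gamma_1\|s_k\|$. $\mathcal{K}$ is the set of indices $k$ such that iteration $k$ is completed without termination; $\mathcal{S}=\{k\in\mathcal{K}:\rho_k\ge\eta\}$ (successful iterations). Standing assumption: the sequence $\{f_k\}$ is bounded below by some $f_{\rm low}\in\mathbb{R}$, and all segments $[x_k,x_k+s_k]$ lie in an open set on which $f$ is twice continuously differentiable with gradient Lipschitz continuous with constant $L_g>0$ and Hessian Lipschitz continuous with constant $L_H>0$. *)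

(* Defs.v *)
From HB Require Import structures.
From mathcomp Require Import all_boot all_order all_algebra.
From mathcomp Require Import all_classical all_reals all_analysis.
Set Implicit Arguments. Unset Strict Implicit. Unset Printing Implicit Defensive.
Import Order.TTheory GRing.Theory Num.Theory.
Import numFieldNormedType.Exports.
Local Open Scope ring_scope.

Section Defs.
Variables (R : realType) (n : nat).

Definition dotv (u v : 'cV[R]_n) : R := (u^T *m v) 0 0.
Definition enorm (u : 'cV[R]_n) : R := Num.sqrt (dotv u u).

(* x is an (eps_g, eps_H)-stationary point: ||g(x)|| <= eps_g and
   lambda_min(H(x)) >= -eps_H, i.e. every (real) eigenvalue of the
   (symmetric) matrix H(x) is >= -eps_H. *)
Definition stationary (g : 'cV[R]_n -> 'cV[R]_n) (H : 'cV[R]_n -> 'M[R]_n)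
  (eps_g eps_H : R) (x : 'cV[R]_n) : Prop :=
  enorm (g x) <= eps_g /\ (forall a : R, eigenvalue (H x) a -> - eps_H <= a).

(* quadratic model m_k(x_k + s) - f_k  =  g_k^T s + 1/2 s^T H_k s *)
Definition model_incr (gk : 'cV[R]_n) (Hk : 'M[R]_n) (s : 'cV[R]_n) : R :=
  dotv gk s + 2^-1 * dotv s (Hk *m s).

(* objective of the regularized trust-region subproblem (up to the constant f_k) *)
Definition tr_obj (eps_H : R) (gk : 'cV[R]_n) (Hk : 'M[R]_n) (s : 'cV[R]_n) : R :=
  model_incr gk Hk s + 2^-1 * eps_H * enorm s ^+ 2.

Definition tr_solution (eps_H : R) (gk : 'cV[R]_n) (Hk : 'M[R]_n) (delta : R)
  (s : 'cV[R]_n) : Prop :=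
  enorm s <= delta /\
  forall s' : 'cV[R]_n, enorm s' <= delta -> tr_obj eps_H gk Hk s <= tr_obj eps_H gk Hk s'.

Definition rho_ratio (f : 'cV[R]_n -> R) (g : 'cV[R]_n -> 'cV[R]_n)
  (H : 'cV[R]_n -> 'M[R]_n) (x s : 'cV[R]_n) : R :=
  (f x - f (x + s)) / (- model_incr (g x) (H x) s).

Definition C2_on (U : set 'cV[R]_n) (f : 'cV[R]_n -> R)
  (g : 'cV[R]_n -> 'cV[R]_n) (H : 'cV[R]_n -> 'M[R]_n) : Prop :=
  open U /\
  forall x, U x ->
    [/\ differentiable f x, ('d f x : 'cV[R]_n -> R) = (fun h => dotv (g x) h),
        differentiable g x, ('d g x : 'cV[R]_n -> 'cV[R]_n) = (fun h => H x *m h)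
      & {for x, continuous H}].

End Defs.

(* Main.v *)
Require Import Defs.
From HB Require Import structures.
From mathcomp Require Import all_boot all_order all_algebra.
From mathcomp Require Import all_classical all_reals all_analysis.
From mathcomp Require Import ring lra zify.
Import Order.TTheory GRing.Theory Num.Theory.
Import numFieldNormedType.Exports.
Local Open Scope ring_scope.

Module Aux.
Set Implicit Arguments. Unset Strict Implicit. Unset Printing Implicit Defensive.

Section LA.
Variables (R : realType) (n : nat).
Implicit Types u v w : 'cV[R]_n.

Lemma dotvE u v : dotv u v = \sum_i u i 0 * v i 0.
Proof. by rewrite /dotv !mxE; apply: eq_bigr => i _; rewrite mxE. Qed.

Lemma dotvC u v : dotv u v = dotv v u.
Proof. by rewrite !dotvE; apply: eq_bigr => i _; rewrite mulrC. Qed.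

Lemma dotvDl u v w : dotv (u + v) w = dotv u w + dotv v w.
Proof. by rewrite !dotvE -big_split; apply: eq_bigr => i _; rewrite mxE mulrDl. Qed.

Lemma dotvDr u v w : dotv w (u + v) = dotv w u + dotv w v.
Proof. by rewrite dotvC dotvDl !(dotvC w). Qed.

Lemma dotvZl a u v : dotv (a *: u) v = a * dotv u v.
Proof. by rewrite !dotvE mulr_sumr; apply: eq_bigr => i _; rewrite mxE mulrA. Qed.

Lemma dotvZr a u v : dotv v (a *: u) = a * dotv v u.
Proof. by rewrite dotvC dotvZl dotvC. Qed.

Lemma dotvNl u v : dotv (- u) v = - dotv u v.
Proof. by rewrite -scaleN1r dotvZl mulN1r. Qed.

Lemma dotvNr u v : dotv v (- u) = - dotv v u.
Proof. by rewrite dotvC dotvNl dotvC. Qed.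

Lemma dotvBl u v w : dotv (u - v) w = dotv u w - dotv v w.
Proof. by rewrite dotvDl dotvNl. Qed.

Lemma dotvBr u v w : dotv w (u - v) = dotv w u - dotv w v.
Proof. by rewrite dotvDr dotvNr. Qed.

Lemma dotv0l u : dotv 0 u = 0.
Proof. by rewrite -(scale0r 0) dotvZl mul0r. Qed.

Lemma dotv0r u : dotv u 0 = 0.
Proof. by rewrite dotvC dotv0l. Qed.

Lemma dotvv_ge0 u : 0 <= dotv u u.
Proof. by rewrite dotvE; apply: sumr_ge0 => i _; rewrite -expr2 sqr_ge0. Qed.

Lemma dotvv_eq0 u : dotv u u = 0 -> u = 0.
Proof.
rewrite dotvE => /eqP; rewrite psumr_eq0; last by move=> i _; rewrite -expr2 sqr_ge0.
move=> /allP H; apply/matrixP => i j; rewrite (ord1 j) mxE.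
have /implyP/(_ isT) := H i (mem_index_enum i).
by rewrite -expr2 sqrf_eq0 => /eqP.
Qed.

Lemma enorm_ge0 u : 0 <= enorm u.
Proof. exact: sqrtr_ge0. Qed.

Lemma enorm_sqr u : enorm u ^+ 2 = dotv u u.
Proof. by rewrite /enorm sqr_sqrtr // dotvv_ge0. Qed.

Lemma enorm0 : enorm (0 : 'cV[R]_n) = 0.
Proof. by rewrite /enorm dotv0l sqrtr0. Qed.

Lemma enorm_eq0 u : enorm u = 0 -> u = 0.
Proof. by move=> h; apply: dotvv_eq0; rewrite -enorm_sqr h expr0n. Qed.

Lemma enormZ a u : enorm (a *: u) = `|a| * enorm u.
Proof.
rewrite /enorm dotvZl dotvZr mulrA -expr2 sqrtrM ?sqr_ge0 //.
by rewrite sqrtr_sqr.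
Qed.

Lemma enormN u : enorm (- u) = enorm u.
Proof. by rewrite -scaleN1r enormZ normrN normr1 mul1r. Qed.

Lemma CS_sqr u v : dotv u v ^+ 2 <= dotv u u * dotv v v.
Proof.
set a := dotv v v; set b := dotv u v; set c := dotv u u.
have ha : 0 <= a by apply: dotvv_ge0.
have hc : 0 <= c by apply: dotvv_ge0.
have key : forall t : R, 0 <= c - 2 * t * b + t ^+ 2 * a.
  move=> t; have := dotvv_ge0 (u - t *: v).
  rewrite !dotvBl !dotvBr !dotvZl !dotvZr (dotvC v u) -/a -/b -/c.
  move=> h; nra.
have [a0|apos] := eqVneq a 0.
  have [b0|bn0] := eqVneq b 0; first by rewrite b0 a0; lra.
  have := key ((c + 1) / (2 * b)).
  have -> : c - 2 * ((c + 1) / (2 * b)) * b + ((c + 1) / (2 * b)) ^+ 2 * a = -1.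
    by rewrite a0; field; rewrite bn0.
  lra.
have apos' : 0 < a by rewrite lt_def apos ha.
have := key (b / a).
have e : c - 2 * (b / a) * b + (b / a) ^+ 2 * a = (c * a - b ^+ 2) / a.
  field. exact: apos.
rewrite e pmulr_lge0 ?invr_gt0 //; lra.
Qed.

Lemma CS u v : dotv u v <= enorm u * enorm v.
Proof.
have h := CS_sqr u v.
have : `|dotv u v| <= enorm u * enorm v.
  rewrite /enorm -sqrtrM ?dotvv_ge0 // -(sqrtr_sqr (dotv u v)).
  by rewrite ler_sqrt // mulr_ge0 // dotvv_ge0.
by apply: le_trans; apply: ler_norm.
Qed.

Lemma CSabs u v : `|dotv u v| <= enorm u * enorm v.
Proof.
rewrite /enorm -sqrtrM ?dotvv_ge0 // -(sqrtr_sqr (dotv u v)).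
by rewrite ler_sqrt ?mulr_ge0 ?dotvv_ge0 // CS_sqr.
Qed.

Lemma enormD u v : enorm (u + v) <= enorm u + enorm v.
Proof.
rewrite -(ler_pXn2r (_ : (0 < 2)%N)) ?nnegrE ?addr_ge0 ?enorm_ge0 //.
rewrite enorm_sqr dotvDl !dotvDr (dotvC v u) sqrrD !enorm_sqr.
have := CS u v; nra.
Qed.

Lemma enormB u v : enorm (u - v) <= enorm u + enorm v.
Proof. by rewrite -(enormN v); apply: enormD. Qed.

Lemma entry_le_enorm u i : `|u i 0| <= enorm u.
Proof.
rewrite -(ler_pXn2r (_ : (0 < 2)%N)) ?nnegrE ?enorm_ge0 // enorm_sqr dotvE.
rewrite real_normK ?num_real // (bigD1 i) //= -expr2 lerDl.
by apply: sumr_ge0 => j _; rewrite -expr2 sqr_ge0.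
Qed.

End LA.

Section Calc.
Variables (R : realType) (n : nat).

Lemma line_derive (F : 'cV[R]_n -> R) (y a : 'cV[R]_n) (t : R) :
  differentiable F (y + t *: a) ->
  derivable (fun r : R => F (y + r *: a)) t 1 /\
  derive1 (fun r : R => F (y + r *: a)) t = 'd F (y + t *: a) a.
Proof.
move=> dF.
pose gam := (cst y + ( *:%R ^~ a)) : R -> 'cV[R]_n.
have hg : is_diff t gam (0 + ( *:%R ^~ a)) by apply: is_diffD.
have e : (fun r : R => F (y + r *: a)) = F \o gam by [].
have dg : differentiable gam t by exact: ex_diff.
have dc : differentiable (F \o gam) t by apply: differentiable_comp.
rewrite e; split; first exact: diff_derivable.
rewrite derive1E' // diff_comp // (@diff_val _ _ _ _ _ _ _ hg) /=.
by rewrite add0r scale1r.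
Qed.

End Calc.

Section Dot.
Variables (R : realType) (n : nat).

Lemma dotv_lin (w : 'cV[R]_n) : linear (dotv w).
Proof. by move=> a u v; rewrite dotvDr dotvZr. Qed.

Lemma dotv_differentiable (w p : 'cV[R]_n) : differentiable (dotv w) p.
Proof.
have -> : dotv w = \sum_(i < n) (fun v : 'cV[R]_n => w i 0 *: (fun v : 'cV[R]_n => v i 0) v).
  apply/funext => v; rewrite dotvE fct_sumE; apply: eq_bigr => i _ //.
apply: differentiable_sum => i.
have -> : (fun v : 'cV[R]_n => w i 0 *: (fun v : 'cV[R]_n => v i 0) v) =
   (w i 0) *: (fun v : 'cV[R]_n => v i 0) by [].
apply: differentiableZ; exact: differentiable_coord.
Qed.

Lemma diff_dotv (w p : 'cV[R]_n) : 'd (dotv w) p = dotv w :> ('cV[R]_n -> R).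
Proof.
pose L : {linear 'cV[R]_n -> R} := HB.pack (dotv w) (GRing.isLinear.Build _ _ _ _ _ (dotv_lin w)).
have cL : continuous L.
  move=> q; apply: differentiable_continuous; exact: dotv_differentiable.
exact: (@diff_lin _ _ _ L p cL).
Qed.

End Dot.


Section Cmp.
Local Open Scope classical_set_scope.
Variable R : realType.

Lemma poly3_derive (b c d t : R) :
  derivable (fun s : R => b * s + c / 2 * s ^+ 2 + d / 3 * s ^+ 3) t 1 /\
  derive1 (fun s : R => b * s + c / 2 * s ^+ 2 + d / 3 * s ^+ 3) t = b + c * t + d * t ^+ 2.
Proof.
have h1 : is_derive t (1:R) (fun s : R => b * s) b.
  by apply: is_derive_eq; exact: mulr1.
have h2 : is_derive t (1:R) (fun s : R => c / 2 * s ^+ 2) (c * t).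
  by apply: is_derive_eq; change ((c / 2) * (t * 1 + t * 1) = c * t); field.
have h3 : is_derive t (1:R) (fun s : R => d / 3 * s ^+ 3) (d * t ^+ 2).
  by apply: is_derive_eq; change ((d / 3) * (t * (t * 1 + t * 1) + (t * t) * 1) = d * t ^+ 2); field.
have h := is_deriveD (is_deriveD h1 h2) h3.
split; first exact: (@ex_derive _ _ _ _ _ _ _ h).
by rewrite derive1E (@derive_val _ _ _ _ _ _ _ h).
Qed.

Lemma cmp01 (F : R -> R) (b c d : R) :
  (forall t, 0 <= t <= 1 -> derivable F t 1) ->
  (forall t, 0 < t < 1 -> derive1 F t <= b + c * t + d * t ^+ 2) ->
  F 1 - F 0 <= b + c / 2 + d / 3.
Proof.
move=> dF hF.
pose P := fun s : R => b * s + c / 2 * s ^+ 2 + d / 3 * s ^+ 3.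
pose G := F - P.
have dG : forall t, 0 <= t <= 1 -> derivable G t 1.
  by move=> t ht; apply: derivableB; [exact: dF | case: (poly3_derive b c d t)].
have hG : forall t, t \in `]0, 1[%R -> derive1 G t <= 0.
  move=> t; rewrite in_itv /= => /andP[t0 t1].
  have [dP eP] := poly3_derive b c d t.
  rewrite derive1E deriveB; last 2 first.
  - by apply: dF; rewrite !ltW.
  - exact: dP.
  rewrite -!derive1E eP subr_le0; apply: hF; rewrite t0 t1 //.
have cG : {within `[0, 1], continuous G}.
  apply: continuous_in_subspaceT => t; rewrite inE /= in_itv /= => ht.
  apply: differentiable_continuous; apply/derivable1_diffP; exact: dG.
have dGo : forall t, t \in `]0, 1[%R -> derivable G t 1.
  by move=> t; rewrite in_itv /= => /andP[t0 t1]; apply: dG; rewrite !ltW.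
have := @ler0_derive1_le_cc R G 0 1 dGo hG cG 1 0.
rewrite !in_itv /= !lexx ler01 => /(_ isT isT isT).
rewrite /G /P /= !fctE /= !expr1n !mulr1 !expr0n /= !mulr0 !addr0 subr0.
lra.
Qed.

End Cmp.

Section Taylor.
Variables (R : realType) (n : nat) (f : 'cV[R]_n -> R) (g : 'cV[R]_n -> 'cV[R]_n)
  (H : 'cV[R]_n -> 'M[R]_n) (U : set 'cV[R]_n) (L : R).
Hypothesis hC2 : C2_on U f g H.
Hypothesis L0 : 0 <= L.
Hypothesis hL : forall y z v, U y -> U z ->
  enorm ((H y - H z) *m v) <= L * enorm (y - z) * enorm v.

Lemma addKl (y z : 'cV[R]_n) : y + z - y = z.
Proof. by rewrite addrC addKr. Qed.

Lemma dgw (w p : 'cV[R]_n) : U p ->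
  differentiable (dotv w \o g) p /\ forall a, 'd (dotv w \o g) p a = dotv w (H p *m a).
Proof.
move=> Up; have [_ /(_ p Up) [_ _ dg eg _]] := hC2.
have dd : differentiable (dotv w) (g p) by apply: dotv_differentiable.
split; first by apply: differentiable_comp.
by move=> a; rewrite diff_comp // diff_dotv /= eg.
Qed.

Lemma T2 (y a w : 'cV[R]_n) : (forall t, 0 <= t <= 1 -> U (y + t *: a)) ->
  dotv w (g (y + a) - g y - H y *m a) <= L / 2 * enorm a ^+ 2 * enorm w.
Proof.
move=> hU.
pose F := fun t : R => (dotv w \o g) (y + t *: a).
have U0 : U y by have := hU 0; rewrite scale0r addr0 lexx ler01; apply.
have := @cmp01 R F (dotv w (H y *m a)) (L * enorm a ^+ 2 * enorm w) 0.
have e1 : F 1 = dotv w (g (y + a)) by rewrite /F /= scale1r.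
have e0 : F 0 = dotv w (g y) by rewrite /F /= scale0r addr0.
rewrite e1 e0 mul0r addr0 => h.
rewrite !dotvBr; suff : dotv w (g (y + a)) - dotv w (g y) <=
   dotv w (H y *m a) + L * enorm a ^+ 2 * enorm w / 2 by lra.
apply: h.
- move=> t ht; have [dG _] := dgw w (hU t ht).
  by have [] := line_derive dG.
- move=> t /andP[t0 t1].
  have ht : 0 <= t <= 1 by rewrite !ltW.
  have [dG eG] := dgw w (hU t ht).
  have [_ ->] := line_derive dG.
  rewrite eG mul0r addr0.
  have : dotv w ((H (y + t *: a) - H y) *m a) <= L * enorm a ^+ 2 * enorm w * t.
    apply: le_trans (CS _ _) _.
    have := hL a (hU t ht) U0; rewrite addKl enormZ (ger0_norm (ltW t0)) => hh.
    have := enorm_ge0 w; have := enorm_ge0 a; have := enorm_ge0 ((H (y + t *: a) - H y) *m a).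
    nra.
  by rewrite mulmxBl dotvBr; lra.
Qed.

Lemma T2n (y a : 'cV[R]_n) : (forall t, 0 <= t <= 1 -> U (y + t *: a)) ->
  enorm (g (y + a) - g y - H y *m a) <= L / 2 * enorm a ^+ 2.
Proof.
move=> hU; set v := _ - _ - _.
have := T2 v hU; rewrite -enorm_sqr => h.
have := enorm_ge0 v; have := enorm_ge0 a.
have [->|vp] := eqVneq (enorm v) 0.
  by move=> *; rewrite mulr_ge0 ?divr_ge0 ?sqr_ge0.
move=> a0 v0.
have vp' : 0 < enorm v by rewrite lt_def vp v0.
rewrite expr2 in h.
have : enorm v * enorm v <= (L / 2 * enorm a ^+ 2) * enorm v by lra.
by rewrite ler_pM2r.
Qed.

Lemma T1 (y a : 'cV[R]_n) (c : R) : `|c| <= 1 ->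
  (forall t, 0 <= t <= 1 -> U (y + t *: a)) ->
  c * (f (y + a) - f y - dotv (g y) a - 2^-1 * dotv a (H y *m a)) <=
  L / 6 * enorm a ^+ 3.
Proof.
move=> hc hU.
pose F := fun t : R => c * f (y + t *: a).
have U0 : U y by have := hU 0; rewrite scale0r addr0 lexx ler01; apply.
have := @cmp01 R F (c * dotv (g y) a) (c * dotv a (H y *m a)) (L / 2 * enorm a ^+ 3).
have e1 : F 1 = c * f (y + a) by rewrite /F /= scale1r.
have e0 : F 0 = c * f y by rewrite /F /= scale0r addr0.
rewrite e1 e0 => h.
suff : c * f (y + a) - c * f y <= c * dotv (g y) a + c * dotv a (H y *m a) / 2 +
  L / 2 * enorm a ^+ 3 / 3.
  have -> : L / 6 * enorm a ^+ 3 = L / 2 * enorm a ^+ 3 / 3 by field.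
  move=> hh; rewrite !mulrBr; lra.
apply: h.
- move=> t ht; have [_ /(_ _ (hU t ht)) [df _ _ _ _]] := hC2.
  have [d _] := line_derive df.
  by apply: derivableZ.
- move=> t /andP[t0 t1].
  have ht : 0 <= t <= 1 by rewrite !ltW.
  have [_ /(_ _ (hU t ht)) [df edf _ _ _]] := hC2.
  have [d ed] := line_derive df.
  rewrite /F derive1E deriveZ // -derive1E ed edf.
  have hU' : forall s, 0 <= s <= 1 -> U (y + s *: (t *: a)).
    move=> s /andP[s0 s1]; rewrite scalerA; apply: hU.
    apply/andP; split; first by rewrite mulr_ge0 // ltW.
    by rewrite -(mulr1 1) ler_pM // ltW.
  have := T2n hU'.
  set v := g (y + t *: a) - g y - H y *m (t *: a) => hv.
  have ev : g (y + t *: a) = v + g y + t *: (H y *m a).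
    by rewrite /v -scalemxAr addrAC !subrK.
  clearbody v.
  have e2 : dotv (g (y + t *: a)) a = dotv v a + dotv (g y) a + t * dotv a (H y *m a).
    by rewrite ev !dotvDl dotvZl (dotvC (H y *m a) a).
  rewrite e2; change (c * (dotv v a + dotv (g y) a + t * dotv a (H y *m a)) <=
    c * dotv (g y) a + c * dotv a (H y *m a) * t + L / 2 * enorm a ^+ 3 * t ^+ 2).
  have hva : c * dotv v a <= L / 2 * enorm a ^+ 3 * t ^+ 2.
    apply: le_trans (ler_norm _) _.
    rewrite normrM.
    have := CSabs v a; rewrite enormZ (ger0_norm (ltW t0)) in hv => hh.
    have := normr_ge0 (dotv v a); have := enorm_ge0 a; have := enorm_ge0 v.
    have := normr_ge0 c.
    nra.
  lra.
Qed.

End Taylor.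

Lemma open_ball_enorm (R : realType) (n : nat) (U : set 'cV[R]_n) p :
  open U -> U p -> exists2 r, 0 < r & forall q, enorm (q - p) < r -> U q.
Proof.
move=> oU Up.
have /nbhs_ballP [r r0 hr] : nbhs p U by apply: open_nbhs_nbhs; split.
exists r => // q hq; apply: hr.
rewrite -ball_normE /=; apply: le_lt_trans hq.
rewrite [X in X <= _]mx_normrE; apply: bigmax_le; first exact: enorm_ge0.
move=> [i j] _ /=; rewrite (ord1 j); apply: le_trans (entry_le_enorm (q - p) i); rewrite !mxE.
by rewrite distrC.
Qed.

Section Sym.
Variables (R : realType) (n : nat) (f : 'cV[R]_n -> R) (g : 'cV[R]_n -> 'cV[R]_n)
  (H : 'cV[R]_n -> 'M[R]_n) (U : set 'cV[R]_n) (L : R).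
Hypothesis hC2 : C2_on U f g H.
Hypothesis L0 : 0 <= L.
Hypothesis hL : forall y z v, U y -> U z ->
  enorm ((H y - H z) *m v) <= L * enorm (y - z) * enorm v.

Lemma T1abs (y a : 'cV[R]_n) : (forall t, 0 <= t <= 1 -> U (y + t *: a)) ->
  `|f (y + a) - f y - dotv (g y) a - 2^-1 * dotv a (H y *m a)| <=
  L / 6 * enorm a ^+ 3.
Proof.
move=> hU; rewrite ler_norml; apply/andP; split.
  have := T1 hC2 L0 hL (c := -1) (y := y) (a := a); rewrite normrN normr1 lexx.
  move=> /(_ isT hU); lra.
have := T1 hC2 L0 hL (c := 1) (y := y) (a := a); rewrite normr1 lexx.
move=> /(_ isT hU); lra.
Qed.

Definition Dl (p u v : 'cV[R]_n) (t : R) :=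
  f (p + t *: u + t *: v) - f (p + t *: u) - f (p + t *: v) + f p.

Lemma expand (p u v : 'cV[R]_n) (t : R) :
  (forall q, enorm q <= t * (enorm u + enorm v) -> U (p + q)) -> 0 < t ->
  `|Dl p u v t - t ^+ 2 * dotv (H p *m u) v| <=
  t ^+ 3 * (L / 3 * enorm v ^+ 3 + L / 2 * enorm u ^+ 2 * enorm v +
            L / 2 * enorm u * enorm v ^+ 2).
Proof.
move=> hB t0.
have nu := enorm_ge0 u; have nv := enorm_ge0 v.
have tv := mulr_ge0 (ltW t0) nv; have tu := mulr_ge0 (ltW t0) nu.
have nzu : enorm (t *: u) = t * enorm u by rewrite enormZ gtr0_norm.
have nzv : enorm (t *: v) = t * enorm v by rewrite enormZ gtr0_norm.
have U0 : U p by have := hB 0; rewrite addr0 enorm0; apply; apply: mulr_ge0; [exact: ltW | exact: addr_ge0].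
have Uu : U (p + t *: u) by apply: hB; rewrite nzu; nra.
have seg1 : forall s, 0 <= s <= 1 -> U (p + t *: u + s *: (t *: v)).
  move=> s /andP[s0 s1]; rewrite -addrA; apply: hB.
  apply: le_trans (enormD _ _) _; rewrite nzu enormZ nzv ger0_norm //; nra.
have seg2 : forall s, 0 <= s <= 1 -> U (p + s *: (t *: v)).
  move=> s /andP[s0 s1]; apply: hB; rewrite enormZ nzv ger0_norm //; nra.
have seg3 : forall s, 0 <= s <= 1 -> U (p + s *: (t *: u)).
  move=> s /andP[s0 s1]; apply: hB; rewrite enormZ nzu ger0_norm //; nra.
have E1 := T1abs seg1.
have E2 := T1abs seg2.
have E3 := T2n hC2 L0 hL seg3.
have E4 := hL v Uu U0.
rewrite addKl nzu in E4.
rewrite nzv in E1 E2; rewrite nzu in E3.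
set w := g (p + t *: u) - g p - H p *m (t *: u) in E3.
have eqg : g (p + t *: u) = w + g p + t *: (H p *m u).
  by rewrite /w -scalemxAr addrAC !subrK.
set A := dotv (H p *m u) v.
have eqg' : t * dotv (g (p + t *: u)) v - t * dotv (g p) v = t * dotv w v + t ^+ 2 * A.
  by rewrite eqg !dotvDl dotvZl -/A; ring.
have bw : `|t * dotv w v| <= t ^+ 3 * (L / 2 * enorm u ^+ 2 * enorm v).
  rewrite normrM gtr0_norm //.
  have := CSabs w v; have := normr_ge0 (dotv w v); have := enorm_ge0 w.
  have -> : t ^+ 3 * (L / 2 * enorm u ^+ 2 * enorm v) =
    t * ((L / 2 * (t * enorm u) ^+ 2) * enorm v) by ring.
  move=> *; rewrite ler_pM2l //; apply: le_trans (CSabs w v) _.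
  by rewrite ler_wpM2r.
set e4 := dotv v ((H (p + t *: u) - H p) *m v).
have eqh : dotv (t *: v) (H (p + t *: u) *m (t *: v)) - dotv (t *: v) (H p *m (t *: v))
    = t ^+ 2 * e4.
  by rewrite /e4 !dotvZl -!scalemxAr !dotvZr mulmxBl dotvBr; ring.
have b4 : `|t ^+ 2 * e4| <= t ^+ 3 * (L * enorm u * enorm v ^+ 2).
  rewrite normrM gtr0_norm ?exprn_gt0 //.
  have -> : t ^+ 3 * (L * enorm u * enorm v ^+ 2) =
    t ^+ 2 * (enorm v * (L * (t * enorm u) * enorm v)) by ring.
  rewrite ler_pM2l ?exprn_gt0 //; apply: le_trans (CSabs _ _) _.
  by rewrite ler_wpM2l.
rewrite !dotvZr in E1 E2.
have ed : Dl p u v t - t ^+ 2 * A =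
  (f (p + t *: u + t *: v) - f (p + t *: u) - t * dotv (g (p + t *: u)) v -
     2^-1 * dotv (t *: v) (H (p + t *: u) *m (t *: v)))
  - (f (p + t *: v) - f p - t * dotv (g p) v - 2^-1 * dotv (t *: v) (H p *m (t *: v)))
  + t * dotv w v + 2^-1 * (t ^+ 2 * e4).
  rewrite /Dl -eqh; lra.
rewrite ed.
move: E1 E2 bw b4.
set r1 := (X in `|X| <= _ -> `|_| <= _ -> _) .
set r2 := (X in _ -> `|X| <= _ -> _) .
move=> E1 E2 bw b4.
have : `|r1 - r2 + t * dotv w v + 2^-1 * (t ^+ 2 * e4)| <=
  `|r1| + `|r2| + `|t * dotv w v| + 2^-1 * `|t ^+ 2 * e4|.
  apply: le_trans (ler_normD _ _) _; rewrite normrM gtr0_norm ?invr_gt0 //.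
  rewrite lerD2r; apply: le_trans (ler_normD _ _) _; rewrite lerD2r.
  by apply: le_trans (ler_normB _ _) _.
move=> h; apply: le_trans h _.
have e6 : L / 6 * (t * enorm v) ^+ 3 = t ^+ 3 * (L / 6 * enorm v ^+ 3) by ring.
rewrite e6 in E1 E2.
lra.
Qed.


Lemma Hsym (p u v : 'cV[R]_n) : U p -> dotv (H p *m u) v = dotv (H p *m v) u.
Proof.
move=> Up; have [oU _] := hC2; have [r r0 hr] := open_ball_enorm oU Up.
set A := dotv (H p *m u) v; set B := dotv (H p *m v) u.
have nu := enorm_ge0 u; have nv := enorm_ge0 v.
set K1 := L / 3 * enorm v ^+ 3 + L / 2 * enorm u ^+ 2 * enorm v +
            L / 2 * enorm u * enorm v ^+ 2.
set K2 := L / 3 * enorm u ^+ 3 + L / 2 * enorm v ^+ 2 * enorm u +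
            L / 2 * enorm v * enorm u ^+ 2.
have K0 : 0 <= K1 + K2 by rewrite /K1 /K2; apply: addr_ge0;
  repeat apply: addr_ge0; repeat apply: mulr_ge0 => //; rewrite ?divr_ge0 ?exprn_ge0.
have key : forall t, 0 < t -> t * (enorm u + enorm v) < r ->
    t ^+ 2 * `|A - B| <= t ^+ 3 * (K1 + K2).
  move=> t t0 tr.
  have hB : forall q, enorm q <= t * (enorm u + enorm v) -> U (p + q).
    by move=> q hq; apply: hr; rewrite addKl; apply: le_lt_trans tr.
  have hB' : forall q, enorm q <= t * (enorm v + enorm u) -> U (p + q).
    by move=> q; rewrite addrC; apply: hB.
  have e1 := expand hB t0; have e2 := expand hB' t0.
  have ep : p + t *: v + t *: u = p + t *: u + t *: v by rewrite addrAC.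
  have eD : Dl p v u t = Dl p u v t by rewrite /Dl ep; lra.
  rewrite eD -/A -/B -/K1 in e1 e2.
  have -> : t ^+ 2 * `|A - B| = `|(Dl p u v t - t ^+ 2 * B) - (Dl p u v t - t ^+ 2 * A)|.
    rewrite -[X in X * _](@ger0_norm _ (t ^+ 2)) ?exprn_ge0 ?ltW // -normrM.
    by congr `|_|; ring.
  apply: le_trans (ler_normB _ _) _.
  have -> : K2 = L / 3 * enorm u ^+ 3 + L / 2 * enorm v ^+ 2 * enorm u +
            L / 2 * enorm v * enorm u ^+ 2 by [].
  move: e2; rewrite -/K2 => e2; lra.
apply/eqP; rewrite -subr_eq0; apply/eqP.
apply/normr0_eq0/eqP; rewrite eq_le normr_ge0 andbT.
apply/negPn/negP; rewrite -ltNge => dpos.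
set d := `|A - B| in dpos key.
pose t := Num.min (r / (2 * (enorm u + enorm v + 1))) (d / (2 * (K1 + K2 + 1))).
have tpos : 0 < t.
  by rewrite lt_min !divr_gt0 // ?mulr_gt0 //; lra.
have t1 : t <= r / (2 * (enorm u + enorm v + 1)) by rewrite ge_min lexx.
have t2 : t <= d / (2 * (K1 + K2 + 1)) by rewrite ge_min lexx orbT.
have tr : t * (enorm u + enorm v) < r.
  rewrite ler_pdivlMr in t1; last lra.
  nra.
have := key t tpos tr.
have td : t * (K1 + K2) < d.
  rewrite ler_pdivlMr in t2; last lra.
  nra.
have t2p : 0 < t ^+ 2 by rewrite exprn_gt0.
rewrite (_ : t ^+ 3 * (K1 + K2) = t ^+ 2 * (t * (K1 + K2))); last by ring.
rewrite ler_pM2l //; lra.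
Qed.

End Sym.

Lemma quad_min (R : realType) (a c tau : R) : 0 < tau ->
  (forall t, `|t| <= tau -> 0 <= t * a + t ^+ 2 * c) -> a = 0.
Proof.
move=> tau0 h; apply/eqP; apply/negPn/negP => a0.
pose m := Num.min tau 1.
have m0 : 0 < m by rewrite lt_min tau0 ltr01.
have m1 : m <= 1 by rewrite ge_min lexx orbT.
have mt : m <= tau by rewrite ge_min lexx.
pose D := (`|a| + 1) * (`|c| + 1).
have na := normr_ge0 a; have nc := normr_ge0 c.
have D1 : 1 <= D by rewrite /D; nra.
pose k := m / D.
have k0 : 0 < k by rewrite divr_gt0 //; lra.
have kD : k * D = m by rewrite /k mulfVK //; apply/eqP => D0; lra.
have aD : `|a| <= D by rewrite /D; nra.
have cD : `|c| + 1 <= D by rewrite /D; nra.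
have hk : `|- (a * k)| <= tau.
  rewrite normrN normrM (gtr0_norm k0).
  have := ler_wpM2r (ltW k0) aD; lra.
have := h _ hk.
have kc : k * c < 1.
  have : k * c <= k * `|c| by rewrite ler_pM2l // ler_norm.
  have : k * (`|c| + 1) <= k * D by rewrite ler_pM2l.
  lra.
have a2 : 0 < a ^+ 2 by rewrite exprn_even_gt0 //= a0.
have e : - (a * k) * a + (- (a * k)) ^+ 2 * c = a ^+ 2 * k * (k * c - 1) by ring.
rewrite e => hh.
have ak := mulr_gt0 a2 k0.
have : a ^+ 2 * k * (k * c - 1) < 0 by rewrite pmulr_rlt0 // subr_lt0.
lra.
Qed.

Section Opt.
Variables (R : realType) (n : nat) (e : R) (gk : 'cV[R]_n) (Hk : 'M[R]_n).

Definition Acoef (s v : 'cV[R]_n) :=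
  dotv gk v + 2^-1 * (dotv s (Hk *m v) + dotv v (Hk *m s)) + e * dotv s v.
Definition Bcoef (v : 'cV[R]_n) := dotv v (Hk *m v) + e * dotv v v.

Lemma tr_obj_expand (s v : 'cV[R]_n) (t : R) :
  tr_obj e gk Hk (s + t *: v) = tr_obj e gk Hk s + t * Acoef s v + t ^+ 2 / 2 * Bcoef v.
Proof.
rewrite /tr_obj /model_incr /Acoef /Bcoef !enorm_sqr.
rewrite mulmxDr -scalemxAr !dotvDl !dotvDr !dotvZl !dotvZr (dotvC v s).
lra.
Qed.

Lemma first_order (delta : R) (s : 'cV[R]_n) : tr_solution e gk Hk delta s ->
  enorm s < delta -> forall v, Acoef s v = 0.
Proof.
move=> [sd smin] sint v.
pose tau := (delta - enorm s) / (enorm v + 1).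
have nv := enorm_ge0 v.
have tau0 : 0 < tau by rewrite divr_gt0 //; lra.
have taue : tau * (enorm v + 1) = delta - enorm s by rewrite /tau mulfVK //; apply/eqP; lra.
apply: (@quad_min R _ (Bcoef v / 2) tau tau0) => t ht.
have : enorm (s + t *: v) <= delta.
  apply: le_trans (enormD _ _) _; rewrite enormZ.
  have nt := normr_ge0 t.
  nra.
move=> /smin; rewrite tr_obj_expand; lra.
Qed.

Lemma neg_curv_boundary (delta : R) (s u : 'cV[R]_n) : tr_solution e gk Hk delta s ->
  Bcoef u < 0 -> enorm s = delta.
Proof.
move=> hs Bu; have [sd smin] := hs.
apply/eqP; rewrite eq_le sd /=; rewrite leNgt; apply/negP => sint.
have A0 := first_order hs sint u.
pose tau := (delta - enorm s) / (enorm u + 1).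
have nu := enorm_ge0 u.
have tau0 : 0 < tau by rewrite divr_gt0 //; lra.
have taue : tau * (enorm u + 1) = delta - enorm s by rewrite /tau mulfVK //; apply/eqP; lra.
have : enorm (s + tau *: u) <= delta.
  apply: le_trans (enormD _ _) _; rewrite enormZ gtr0_norm //; nra.
move=> /smin; rewrite tr_obj_expand A0 mulr0 addr0.
have : 0 < tau ^+ 2 by rewrite exprn_gt0.
nra.
Qed.

Lemma model_decrease (delta : R) (s : 'cV[R]_n) : tr_solution e gk Hk delta s ->
  e / 2 * enorm s ^+ 2 <= - model_incr gk Hk s.
Proof.
move=> [sd smin].
have : enorm (0 : 'cV[R]_n) <= delta by rewrite enorm0; apply: le_trans sd; apply: enorm_ge0.
move=> /smin; rewrite /tr_obj /model_incr enorm0 dotv0r dotv0l.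
rewrite expr0n /= mulr0; lra.
Qed.

Lemma grad_rel (delta : R) (s : 'cV[R]_n) : tr_solution e gk Hk delta s ->
  (forall u v, dotv (Hk *m u) v = dotv (Hk *m v) u) ->
  enorm s < delta -> gk + Hk *m s + e *: s = 0.
Proof.
move=> hs sym sint; apply: dotvv_eq0.
have := first_order hs sint (gk + Hk *m s + e *: s).
rewrite /Acoef (dotvC s (Hk *m _)) sym => h.
rewrite !dotvDl dotvZl.
rewrite (dotvC (gk + Hk *m s + e *: s) (Hk *m s)) in h; lra.
Qed.

End Opt.

Lemma eig_dir (R : realType) (n : nat) (A : 'M[R]_n) (a : R) :
  eigenvalue A a -> exists2 u : 'cV[R]_n, 0 < dotv u u & dotv u (A *m u) = a * dotv u u.
Proof.
move=> /eigenvalueP [v hv vn0].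
exists v^T.
  rewrite lt_def dotvv_ge0 andbT; apply/eqP => h.
  have := dotvv_eq0 h => /(congr1 trmx); rewrite trmxK trmx0 => v0.
  by rewrite v0 eqxx in vn0.
rewrite /dotv trmxK mulmxA hv -scalemxAl mxE //.
Qed.

Section Arith.
Variable R : realType.

Lemma grad_case (e eg L s K M : R) : 0 < e -> 0 < eg -> 0 <= L -> 0 < s ->
  1 + 2 * L <= K -> eg ^- 2 * e <= M -> e ^- 3 <= M ->
  eg < L / 2 * s ^+ 2 + e * s -> 1 <= K * M * (e * s ^+ 2).
Proof.
move=> e0 eg0 L0 s0 hK hM1 hM2 hg.
have K0 : 0 < K by lra.
have es0 : 0 < e * s ^+ 2 by rewrite mulr_gt0 // exprn_gt0.
have [caseA|caseB] := lerP ((2 * e + L * s) ^+ 2) (4 * e ^+ 2 * (1 + 2 * L)).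
  have h1 : eg ^+ 2 <= K * e ^+ 2 * s ^+ 2.
    have hg' : eg < s * (2 * e + L * s) / 2 by lra.
    have : eg ^+ 2 <= (s * (2 * e + L * s) / 2) ^+ 2.
      have p0 : 0 <= s * (2 * e + L * s) / 2 by lra.
      by rewrite ler_pXn2r // ?nnegrE ?ltW //; lra.
    move=> hh; apply: le_trans hh _.
    have -> : (s * (2 * e + L * s) / 2) ^+ 2 = s ^+ 2 * (2 * e + L * s) ^+ 2 / 4.
      by field.
    have s2 : 0 < s ^+ 2 by rewrite exprn_gt0.
    have : s ^+ 2 * (2 * e + L * s) ^+ 2 <= s ^+ 2 * (4 * e ^+ 2 * (1 + 2 * L)).
      by rewrite ler_pM2l.
    have : s ^+ 2 * e ^+ 2 * (1 + 2 * L) <= s ^+ 2 * e ^+ 2 * K.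
      by rewrite ler_pM2l // mulr_gt0 // exprn_gt0.
    lra.
  have : K * (eg ^- 2 * e) * (e * s ^+ 2) <= K * M * (e * s ^+ 2).
    by rewrite ler_pM2r // ler_pM2l.
  apply: le_trans.
  have -> : K * (eg ^- 2 * e) * (e * s ^+ 2) = (K * e ^+ 2 * s ^+ 2) / eg ^+ 2.
    by field; rewrite gt_eqF.
  by rewrite ler_pdivlMr ?exprn_gt0 // mul1r.
have Lpos : 0 < L.
  rewrite lt_def L0 andbT; apply/eqP => L00; move: caseB; rewrite L00; lra.
have he2 : e ^+ 2 <= (1 + 2 * L) * s ^+ 2.
  rewrite leNgt; apply/negP => hc.
  have hse : s < e.
    rewrite -(ltr_pXn2r (_ : (0 < 2)%N)) ?nnegrE ?ltW //.
    have : s ^+ 2 <= (1 + 2 * L) * s ^+ 2.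
      have := sqr_ge0 s; nra.
    lra.
  have hB : 4 * e * s + L * s ^+ 2 > 8 * e ^+ 2.
    have : 4 * e ^+ 2 * (2 * L) < 4 * e * (L * s) + (L * s) ^+ 2 by lra.
    move=> hh.
    have : L * (8 * e ^+ 2) < L * (4 * e * s + L * s ^+ 2).
      have -> : L * (8 * e ^+ 2) = 4 * e ^+ 2 * (2 * L) by ring.
      have -> : L * (4 * e * s + L * s ^+ 2) = 4 * e * (L * s) + (L * s) ^+ 2 by ring.
      exact: hh.
    by rewrite ltr_pM2l.
  have h2 : 2 * (L * s ^+ 2) < e ^+ 2 - s ^+ 2 by lra.
  have : e * s < e * e by rewrite ltr_pM2l.
  nra.
have : (1 + 2 * L) * e ^- 3 * (e * s ^+ 2) <= K * M * (e * s ^+ 2).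
  rewrite ler_pM2r //; apply: ler_pM => //; [lra | rewrite invr_ge0 exprn_ge0 // ltW //].
apply: le_trans.
have -> : (1 + 2 * L) * e ^- 3 * (e * s ^+ 2) = (1 + 2 * L) * s ^+ 2 / e ^+ 2.
  by field; rewrite gt_eqF.
by rewrite ler_pdivlMr ?exprn_gt0 // mul1r.
Qed.

Lemma bnd_case (e L g1 eta d0 s K M : R) : 0 < e -> 0 < L -> 0 < g1 -> eta < 1 -> 0 < d0 ->
  Num.min d0 (3 * g1 * (1 - eta) * e / L) <= s ->
  d0 ^- 2 <= K -> L ^+ 2 / (9 * g1 ^+ 2 * (1 - eta) ^+ 2) <= K ->
  e ^-1 <= M -> e ^- 3 <= M -> 1 <= K * M * (e * s ^+ 2).
Proof.
move=> e0 L0 g0 eta1 d00 hs hK1 hK2 hM1 hM2.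
have c0 : 0 < 3 * g1 * (1 - eta) * e / L.
  by rewrite divr_gt0 // !mulr_gt0 //; lra.
have m0 : 0 < Num.min d0 (3 * g1 * (1 - eta) * e / L) by rewrite lt_min d00 c0.
have s0 : 0 < s by apply: lt_le_trans hs.
have es0 : 0 < e * s ^+ 2 by rewrite mulr_gt0 // exprn_gt0.
have [hd|hc] := leP d0 (3 * g1 * (1 - eta) * e / L).
  rewrite (min_l hd) in hs.
  have : d0 ^- 2 * e ^-1 * (e * s ^+ 2) <= K * M * (e * s ^+ 2).
    rewrite ler_pM2r //; apply: ler_pM => //; rewrite ?invr_ge0 ?exprn_ge0 // ltW //.
  apply: le_trans.
  have -> : d0 ^- 2 * e ^-1 * (e * s ^+ 2) = s ^+ 2 / d0 ^+ 2.
    by field; rewrite !gt_eqF.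
  rewrite ler_pdivlMr ?exprn_gt0 // mul1r.
  by rewrite ler_pXn2r // ?nnegrE ?(ltW d00) ?(ltW s0).
rewrite (min_r (ltW hc)) in hs.
have : L ^+ 2 / (9 * g1 ^+ 2 * (1 - eta) ^+ 2) * e ^- 3 * (e * s ^+ 2) <=
    K * M * (e * s ^+ 2).
  rewrite ler_pM2r //; apply: ler_pM => //.
  - apply: divr_ge0; first by rewrite exprn_ge0 // ltW.
    have := sqr_ge0 g1; have := sqr_ge0 (1 - eta); nra.
  - by rewrite invr_ge0 exprn_ge0 // ltW.
apply: le_trans.
have -> : L ^+ 2 / (9 * g1 ^+ 2 * (1 - eta) ^+ 2) * e ^- 3 * (e * s ^+ 2) =
   (s / (3 * g1 * (1 - eta) * e / L)) ^+ 2.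
  by field; rewrite !gt_eqF //; lra.
apply: exprn_ege1; by rewrite ler_pdivlMr // mul1r.
Qed.

End Arith.

Section Main.
Variables (R : realType) (n : nat)
  (f : 'cV[R]_n -> R) (g : 'cV[R]_n -> 'cV[R]_n) (H : 'cV[R]_n -> 'M[R]_n)
  (eps_g eps_H gamma1 gamma2 psi delta_max eta : R)
  (x : nat -> 'cV[R]_n) (delta : nat -> R) (s : nat -> 'cV[R]_n)
  (f_low L_g L_H : R) (U : set 'cV[R]_n) (N : nat).
Hypothesis heg : 0 < eps_g.
Hypothesis heH : 0 < eps_H.
Hypothesis hg1 : 0 < gamma1 < 1.
Hypothesis hg2 : 1 <= gamma2.
Hypothesis hd0 : 0 < delta 0.
Hypothesis hdm : delta 0 <= delta_max.
Hypothesis heta : 0 < eta < 1.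
Hypothesis hflow : forall k, (k <= N)%N -> f_low <= f (x k).
Hypothesis hLH : 0 < L_H.
Hypothesis hC2 : C2_on U f g H.
Hypothesis hLipH : forall y z v, U y -> U z ->
     enorm ((H y - H z) *m v) <= L_H * enorm (y - z) * enorm v.
Hypothesis hseg : forall k, (k < N)%N -> forall t : R, 0 <= t <= 1 -> U (x k + t *: s k).
Hypothesis hnst : forall k, (k < N)%N -> ~ stationary g H eps_g eps_H (x k).
Hypothesis hstep : forall k, (k < N)%N ->
     [/\ tr_solution eps_H (g (x k)) (H (x k)) (delta k) (s k),
         eta <= rho_ratio f g H (x k) (s k) ->
           x k.+1 = x k + s k /\
           delta k.+1 = (if psi * delta k <= enorm (s k)
                         then Num.min (gamma2 * delta k) delta_max else delta k)
       & rho_ratio f g H (x k) (s k) < eta ->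
           x k.+1 = x k /\ delta k.+1 = gamma1 * enorm (s k)].

Let succ k := eta <= rho_ratio f g H (x k) (s k).
Let K := Num.max (delta 0 ^- 2)
       (Num.max (L_H ^+ 2 / (9 * gamma1 ^+ 2 * (1 - eta) ^+ 2)) (1 + 2 * L_H)).
Let M := Num.max (eps_H^-1) (Num.max (eps_g ^- 2 * eps_H) (eps_H ^- 3)).
Let good k := succ k && (1 <= K * M * (eps_H * enorm (s k) ^+ 2)).
Let dmin := Num.min (delta 0) (3 * gamma1 * (1 - eta) * eps_H / L_H).

Lemma LH0 : 0 <= L_H. Proof. exact: ltW. Qed.

Lemma L_U0 k : (k < N)%N -> U (x k).
Proof. by move=> kN; have := hseg kN (t := 0); rewrite scale0r addr0 lexx ler01; apply. Qed.

Lemma L_sym k u v : (k < N)%N -> dotv (H (x k) *m u) v = dotv (H (x k) *m v) u.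
Proof. by move=> kN; apply: (Hsym hC2 LH0 hLipH); apply: L_U0. Qed.

Lemma L_tr k : (k < N)%N -> tr_solution eps_H (g (x k)) (H (x k)) (delta k) (s k).
Proof. by move=> kN; case: (hstep kN). Qed.

Lemma L_negcurv k : (k < N)%N -> enorm (g (x k)) <= eps_g ->
  exists u, Bcoef eps_H (H (x k)) u < 0.
Proof.
move=> kN hg.
have : ~ (forall a : R, eigenvalue (H (x k)) a -> - eps_H <= a).
  by move=> ha; apply: (hnst kN); split.
move=> /existsNP [a /not_implyP [ea ha]].
have [u uu hu] := eig_dir ea.
exists u; rewrite /Bcoef hu.
have : a < - eps_H by rewrite ltNge; apply/negP.
nra.
Qed.

Lemma L_snz k : (k < N)%N -> 0 < delta k -> 0 < enorm (s k).
Proof.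
move=> kN dk; rewrite lt_def enorm_ge0 andbT; apply/eqP => s0.
have s0' := enorm_eq0 s0.
have htr := L_tr kN.
have sint : enorm (s k) < delta k by rewrite s0.
have hfo := first_order htr sint.
apply: (hnst kN); split.
  have := hfo (g (x k)); rewrite /Acoef s0' dotv0l mulmx0 !dotv0r dotv0l.
  rewrite addr0 mulr0 addr0 mulr0 addr0 => /dotvv_eq0 ->.
  by rewrite enorm0 ltW.
move=> a ea; rewrite leNgt; apply/negP => ha.
have [u uu hu] := eig_dir ea.
have Bu : Bcoef eps_H (H (x k)) u < 0 by rewrite /Bcoef hu; nra.
have := neg_curv_boundary htr Bu; rewrite s0 => d0.
by move: dk; rewrite -d0 ltxx.
Qed.


Lemma L_mdec k : (k < N)%N ->
  eps_H / 2 * enorm (s k) ^+ 2 <= - model_incr (g (x k)) (H (x k)) (s k).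
Proof. by move=> kN; apply: model_decrease (L_tr kN). Qed.

Lemma L_unsucc_big k : (k < N)%N -> 0 < enorm (s k) -> ~~ succ k ->
  3 * (1 - eta) * eps_H / L_H < enorm (s k).
Proof.
move=> kN s0 ns; rewrite ltNge; apply/negP => hs; apply: (negP ns).
rewrite /succ /rho_ratio.
have hm := L_mdec kN.
set m := - model_incr _ _ _ in hm *.
set sg := enorm (s k) in s0 hs hm *.
have m0 : 0 < m by apply: lt_le_trans hm; rewrite mulr_gt0 ?divr_gt0 ?exprn_gt0.
rewrite ler_pdivlMr //.
have hT := T1 hC2 LH0 hLipH (c := 1) (_ : `|1 : R| <= 1) (hseg kN).
rewrite ?normr1 // mul1r -/sg in hT.
move: hm; rewrite /m /model_incr => hm.
have hsL : sg * L_H <= 3 * (1 - eta) * eps_H by rewrite -ler_pdivlMr.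
have h1 : sg ^+ 2 * (sg * L_H) <= sg ^+ 2 * (3 * (1 - eta) * eps_H).
  by rewrite ler_wpM2l // exprn_ge0 // ltW.
have h2 : (1 - eta) * (eps_H / 2 * sg ^+ 2) <= (1 - eta) * m.
  by rewrite ler_wpM2l //; case/andP: heta => *; lra.
have e3 : L_H / 6 * sg ^+ 3 = sg ^+ 2 * (sg * L_H) / 6 by ring.
rewrite e3 in hT.
rewrite /m /model_incr in h2.
lra.
Qed.

Lemma L_step_succ k : (k < N)%N -> succ k ->
  x k.+1 = x k + s k /\
  delta k.+1 = (if psi * delta k <= enorm (s k)
                then Num.min (gamma2 * delta k) delta_max else delta k).
Proof. by move=> kN sk; case: (hstep kN) => _ h _; apply: h. Qed.

Lemma L_step_unsucc k : (k < N)%N -> ~~ succ k ->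
  x k.+1 = x k /\ delta k.+1 = gamma1 * enorm (s k).
Proof. by move=> kN sk; case: (hstep kN) => _ _ h; apply: h; rewrite ltNge. Qed.

Lemma L_delta k : (k <= N)%N ->
  [/\ 0 < delta k, delta k <= delta_max & dmin <= delta k].
Proof.
elim: k => [|k IH] kN.
  by split => //; rewrite /dmin ge_min lexx.
have kN' : (k < N)%N by [].
have [dk0 dkm dkmin] := IH (ltnW kN').
have s0 := L_snz kN' dk0.
have [sd _] := L_tr kN'.
have [g10 g11] := andP hg1.
case sk: (succ k).
  have [_ ->] := L_step_succ kN' (sk : succ k).
  have hge : delta k <= Num.min (gamma2 * delta k) delta_max.
    by rewrite le_min dkm andbT ler_peMl // ltW.
  case: ifP => _.
    split; [exact: lt_le_trans hge | by rewrite ge_min lexx orbT | exact: le_trans hge].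
  by split.
have nsk : ~~ succ k by rewrite sk.
have [_ ->] := L_step_unsucc kN' nsk.
have hb := L_unsucc_big kN' s0 nsk.
split.
- by rewrite mulr_gt0.
- apply: le_trans dkm; apply: le_trans sd; rewrite ler_piMl //; [exact: ltW | exact: ltW].
- rewrite /dmin ge_min; apply/orP; right.
  have -> : 3 * gamma1 * (1 - eta) * eps_H / L_H = gamma1 * (3 * (1 - eta) * eps_H / L_H).
    by rewrite !mulrA [gamma1 * 3]mulrC.
  by rewrite ler_pM2l // ltW.
Qed.

Lemma L_decr k : (k < N)%N -> succ k ->
  eta * (eps_H / 2 * enorm (s k) ^+ 2) <= f (x k) - f (x k.+1).
Proof.
move=> kN sk.
have [dk0 _ _] := L_delta (ltnW kN).
have s0 := L_snz kN dk0.
have [-> _] := L_step_succ kN sk.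
have hm := L_mdec kN.
set m := - model_incr _ _ _ in hm.
have m0 : 0 < m by apply: lt_le_trans hm; rewrite mulr_gt0 ?divr_gt0 ?exprn_gt0.
move: sk; rewrite /succ /rho_ratio -/m ler_pdivlMr // => sk.
apply: le_trans sk; rewrite ler_wpM2l //; exact: ltW (andP heta).1.
Qed.

Lemma L_nodecr k : (k < N)%N -> ~~ succ k -> f (x k.+1) = f (x k).
Proof. by move=> kN nsk; have [-> _] := L_step_unsucc kN nsk. Qed.


Lemma KM_facts :
  [/\ delta 0 ^- 2 <= K, L_H ^+ 2 / (9 * gamma1 ^+ 2 * (1 - eta) ^+ 2) <= K,
      1 + 2 * L_H <= K, eps_H ^-1 <= M & (eps_g ^- 2 * eps_H <= M /\ eps_H ^- 3 <= M)].
Proof.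
rewrite /K /M !le_max !lexx /= !orbT; split => //.
Qed.

Lemma L_good_bnd k : (k < N)%N -> enorm (s k) = delta k ->
  1 <= K * M * (eps_H * enorm (s k) ^+ 2).
Proof.
move=> kN sd.
have [_ _ dm] := L_delta (ltnW kN).
have [k1 k2 _ m1 [_ m3]] := KM_facts.
have [g10 _] := andP hg1; have [_ eta1] := andP heta.
apply: (bnd_case heH hLH g10 eta1 hd0) => //.
by rewrite sd.
Qed.

Lemma L_good_grad k : (k < N)%N -> succ k -> enorm (s k) < delta k ->
  eps_g < enorm (g (x k.+1)) -> 1 <= K * M * (eps_H * enorm (s k) ^+ 2).
Proof.
move=> kN sk sint hg.
have [dk0 _ _] := L_delta (ltnW kN).
have s0 := L_snz kN dk0.
have [ex _] := L_step_succ kN sk.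
have hrel := grad_rel (L_tr kN) (fun u v => L_sym u v kN) sint.
have hT := T2n hC2 LH0 hLipH (hseg kN).
have eg : g (x k.+1) = (g (x k + s k) - g (x k) - H (x k) *m s k) - eps_H *: s k.
  rewrite ex.
  have -> : forall a b c d : 'cV[R]_n, a - b - c - d = a - (b + c + d).
    by move=> a b c d; rewrite !opprD !addrA.
  by rewrite hrel subr0.
have hb : enorm (g (x k.+1)) <= L_H / 2 * enorm (s k) ^+ 2 + eps_H * enorm (s k).
  rewrite eg; apply: le_trans (enormB _ _) _; rewrite enormZ gtr0_norm //.
  by rewrite lerD2r.
have [_ _ k3 _ [m2 m3]] := KM_facts.
apply: (grad_case heH heg LH0 s0 k3 m2 m3).
exact: lt_le_trans hb.
Qed.


Lemma L_x_const k d : (k.+1 + d <= N)%N ->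
  (forall i, (k < i < k.+1 + d)%N -> ~~ succ i) -> x (k.+1 + d) = x k.+1.
Proof.
elim: d => [|d IH] hN hi; first by rewrite addn0.
have iN : (k.+1 + d < N)%N by rewrite addnS in hN.
have ns : ~~ succ (k.+1 + d) by apply: hi; apply/andP; split; lia.
rewrite addnS; have [-> _] := L_step_unsucc iN ns.
apply: IH; first exact: ltnW.
by move=> i /andP[h1 h2]; apply: hi; apply/andP; split; lia.
Qed.

Lemma L_good_or k : (k < N)%N -> succ k ->
  (enorm (s k) < delta k /\ enorm (g (x k.+1)) <= eps_g) \/ good k.
Proof.
move=> kN sk.
have [sd _] := L_tr kN.
have [sint|sbd] := ltP (enorm (s k)) (delta k).
  have [hg|hg] := leP (enorm (g (x k.+1))) eps_g; first by left.
  by right; rewrite /good sk /=; apply: L_good_grad.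
right; rewrite /good sk /=; apply: L_good_bnd => //.
by apply/eqP; rewrite eq_le sd sbd.
Qed.

Lemma L_after_bad k j : (k < j)%N -> (j < N)%N -> succ k -> ~~ good k ->
  (forall i, (k < i < j)%N -> ~~ succ i) -> succ j -> good j.
Proof.
move=> kj jN sk nb hi sj.
have kN : (k < N)%N by apply: ltn_trans jN.
have k1N : (k.+1 < N)%N by apply: leq_ltn_trans jN.
have xj : x j = x k.+1.
  have ej : j = (k.+1 + (j - k.+1))%N by rewrite subnKC.
  by rewrite ej; apply: L_x_const; rewrite -ej // ltnW.
have [[sint hg]|gk] := L_good_or kN sk; last by rewrite gk in nb.
have [u Bu] := L_negcurv k1N hg.
rewrite -xj in Bu.
have bd := neg_curv_boundary (L_tr jN) Bu.
by rewrite /good sj /=; apply: L_good_bnd.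
Qed.


Let cS m := (\sum_(0 <= i < m) succ i)%N.
Let cG m := (\sum_(0 <= i < m) good i)%N.
Let Pend m := exists k, [/\ (k < m)%N, succ k, ~~ good k &
   forall i, (k < i < m)%N -> ~~ succ i].

Lemma count_inv m : (m <= N)%N ->
  (cS m <= (cG m).*2 + 1)%N /\ (~ Pend m -> (cS m <= (cG m).*2)%N).
Proof.
elim: m => [|m IH] mN.
  by rewrite /cS /cG !big_geq.
have mN' : (m < N)%N by [].
have [IH1 IH2] := IH (ltnW mN').
have eS : cS m.+1 = (cS m + succ m)%N by rewrite /cS big_nat_recr.
have eG : cG m.+1 = (cG m + good m)%N by rewrite /cG big_nat_recr.
rewrite eS eG -!mul2n.
have hP : ~ Pend m.+1 -> ~~ succ m -> ~ Pend m.
  move=> np nsm [k [km sk gk hk]]; apply: np.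
  exists k; split => //; first exact: ltnW.
  move=> i /andP[ki im]; have [->|ne] := eqVneq i m; first by [].
  by apply: hk; rewrite ki /= ltn_neqAle ne -ltnS.
have hQ : succ m -> ~~ good m -> ~ Pend m.
  move=> sm gm [k [km sk gk hk]].
  by have := L_after_bad km mN' sk gk hk sm; rewrite (negbTE gm).
rewrite -!mul2n in IH1 IH2.
move: IH1 IH2 hP hQ; set a := cS m; set b := cG m; clearbody a b.
move=> IH1 IH2 hP hQ.
case sm: (succ m); last first.
  have -> : good m = false by rewrite /good sm.
  rewrite !addn0; split => // np; apply: IH2; apply: hP => //; by rewrite sm.
case gm: (good m).
  by rewrite /=; split => [|_]; clear -IH1; lia.
have := IH2 (hQ (introT idP sm) (negbT gm)) => h2; split.
  by rewrite /nat_of_bool; clear -h2; lia.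
move=> np; exfalso; apply: np; exists m; split; [done | by rewrite sm | by rewrite gm | ].
by move=> i /andP[h1 h3]; exfalso; clear -h1 h3; lia.
Qed.

Lemma KM_pos : 0 < K * M.
Proof.
have [_ _ k3 m1 _] := KM_facts.
apply: mulr_gt0; first by apply: lt_le_trans k3; rewrite addr_gt0 // mulr_gt0.
by apply: lt_le_trans m1; rewrite invr_gt0.
Qed.

Lemma tele m : (m <= N)%N ->
  (cG m)%:R * (eta / (2 * (K * M))) <= f (x 0) - f (x m).
Proof.
elim: m => [|m IH] mN.
  by rewrite /cG big_geq // mul0r subrr.
have mN' : (m < N)%N by [].
have IH' := IH (ltnW mN').
rewrite /cG big_nat_recr //= -/(cG m) natrD mulrDl.
have km := KM_pos.
have [eta0 eta1] := andP heta.
have c0 : 0 < eta / (2 * (K * M)) by rewrite divr_gt0 // mulr_gt0.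
suff : (good m)%:R * (eta / (2 * (K * M))) <= f (x m) - f (x m.+1) by lra.
case sm: (succ m); last first.
  have -> : good m = false by rewrite /good sm.
  have nsm : ~~ succ m by rewrite sm.
  by rewrite (L_nodecr mN' nsm) subrr mul0r.
have hd := L_decr mN' sm.
have hs := sqr_ge0 (enorm (s m)).
case gm: (good m); last first.
  rewrite mul0r; apply: le_trans hd; apply: mulr_ge0; first lra.
  by apply: mulr_ge0 => //; rewrite divr_ge0 // ltW.
move: gm; rewrite /good sm /= => gm.
rewrite mul1r; apply: le_trans hd.
have -> : eta / (2 * (K * M)) = eta * (2^-1 * (K * M)^-1).
  by rewrite invfM. 

rewrite ler_pM2l //.
have : (K * M)^-1 <= eps_H * enorm (s m) ^+ 2.
  by rewrite -[X in X <= _]mul1r ler_pdivrMr // mulrC.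
lra.
Qed.


Lemma card_succ : #|[pred k : 'I_N | eta <= rho_ratio f g H (x k) (s k)]| = cS N.
Proof.
rewrite /cS -sum1_card big_mkcond /= big_mkord.
apply: eq_bigr => i _ /=; rewrite /succ !inE /=. by case: (eta <= _).
Qed.

Lemma main_bound :
  let C_S := 4 * (f (x 0) - f_low) / eta *
     Num.max (delta 0 ^- 2)
       (Num.max (L_H ^+ 2 / (9 * gamma1 ^+ 2 * (1 - eta) ^+ 2)) (1 + 2 * L_H)) in
  (#|[pred k : 'I_N | eta <= rho_ratio f g H (x k) (s k)]|%:R : R) <=
    (Num.floor (C_S * Num.max (eps_H^-1)
                  (Num.max (eps_g ^- 2 * eps_H) (eps_H ^- 3))))%:~R + 1.
Proof.
cbv zeta.
rewrite -/K -/M.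
set C_S := 4 * (f (x 0) - f_low) / eta * K.
rewrite card_succ.
have [c1 _] := count_inv (leqnn N).
have ht := tele (leqnn N).
have hfl := hflow (leqnn N).
have P0 := KM_pos.
have [eta0 eta1] := andP heta.
move: c1 ht; set S := cS N; set G := cG N; set P := K * M => c1 ht.
have cR : (S%:R : R) <= 2 * G%:R + 1.
  by rewrite -mul2n -(ler_nat R) natrD natrM in c1.
set D := f (x 0) - f_low.
have hD : G%:R * (eta / (2 * P)) <= D by rewrite /D; lra.
have hG : G%:R * eta <= D * (2 * P).
  have e : G%:R * eta = (G%:R * (eta / (2 * P))) * (2 * P) by field; rewrite gt_eqF.
  have P2 : 0 < 2 * P by rewrite mulr_gt0.
  by rewrite e ler_pM2r.
have hCM : C_S * M = (4 * D * P) / eta by rewrite /C_S /P -/D; field; rewrite gt_eqF.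
have hS : (S%:R : R) - 1 <= C_S * M.
  rewrite hCM ler_pdivlMr //.
  have : (S%:R - 1) * eta <= 2 * G%:R * eta by rewrite ler_pM2r //; lra.
  lra.
have hz : (S%:Z - 1 <= Num.floor (C_S * M))%R.
  by rewrite floor_ge_int intrD -pmulrn.
rewrite -(ler_int R) intrD -pmulrn in hz.
lra.
Qed.

End Main.


End Aux.
Import Aux.

Theorem lemma2p4 (R : realType) (n : nat)
  (f : 'cV[R]_n -> R) (g : 'cV[R]_n -> 'cV[R]_n) (H : 'cV[R]_n -> 'M[R]_n)
  (eps_g eps_H gamma1 gamma2 psi delta_max eta : R)
  (x : nat -> 'cV[R]_n) (delta : nat -> R) (s : nat -> 'cV[R]_n)
  (f_low L_g L_H : R) (U : set 'cV[R]_n) (N : nat) :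
  (* algorithm parameters *)
  0 < eps_g -> 0 < eps_H ->
  0 < gamma1 < 1 -> 1 <= gamma2 -> gamma2^-1 < psi <= 1 ->
  0 < delta 0 -> delta 0 <= delta_max -> 0 < eta < 1 ->
  (* standing assumption *)
  (forall k, (k <= N)%N -> f_low <= f (x k)) ->
  0 < L_g -> 0 < L_H ->
  C2_on U f g H ->
  (forall y z, U y -> U z -> enorm (g y - g z) <= L_g * enorm (y - z)) ->
  (forall y z v, U y -> U z ->
     enorm ((H y - H z) *m v) <= L_H * enorm (y - z) * enorm v) ->
  (forall k, (k < N)%N -> forall t : R, 0 <= t <= 1 -> U (x k + t *: s k)) ->
  (* iterations 0, ..., N-1 are completed without termination *)
  (forall k, (k < N)%N -> ~ stationary g H eps_g eps_H (x k)) ->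
  (* the steps and updates of Algorithm 1 at iterations 0, ..., N-1 *)
  (forall k, (k < N)%N ->
     [/\ tr_solution eps_H (g (x k)) (H (x k)) (delta k) (s k),
         eta <= rho_ratio f g H (x k) (s k) ->
           x k.+1 = x k + s k /\
           delta k.+1 = (if psi * delta k <= enorm (s k)
                         then Num.min (gamma2 * delta k) delta_max else delta k)
       & rho_ratio f g H (x k) (s k) < eta ->
           x k.+1 = x k /\ delta k.+1 = gamma1 * enorm (s k)]) ->
  (* number of successful iterations among 0, ..., N-1 *)
  let C_S := 4 * (f (x 0) - f_low) / eta *
     Num.max (delta 0 ^- 2)
       (Num.max (L_H ^+ 2 / (9 * gamma1 ^+ 2 * (1 - eta) ^+ 2)) (1 + 2 * L_H)) in
  (#|[pred k : 'I_N | eta <= rho_ratio f g H (x k) (s k)]|%:R : R) <=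
    (Num.floor (C_S * Num.max (eps_H^-1)
                  (Num.max (eps_g ^- 2 * eps_H) (eps_H ^- 3))))%:~R + 1.
Proof.
move=> heg heH hg1 hg2 hpsi hd0 hdm heta hflow hLg hLH hC2 hLipg hLipH hseg hnst hstep.
exact: (main_bound heg heH hg1 hg2 hd0 hdm heta hflow hLH hC2 hLipH hseg hnst hstep).
Qed.
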